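(* Fix $\alpha\in(0,1)$. Let $(P_i)_{i\ge0}$ be the $\alpha$-random walk and $X_i=1$ if $P_i$ is visible, $X_i=0$ otherwise. Then $$\mathbf V(X_1+\cdots+X_n)\ll n^{3/2}\log n,$$ with implied constant depending only on $\alpha$.
   Context: The $\alpha$-random walk: $P_0=(0,0)$ and $P_{i+1}=P_i+(1,0)$ with probability $\alpha$, $P_{i+1}=P_i+(0,1)$ with probability $1-\alpha$, independently. A lattice point $(a,b)$ is visible if $\gcd(a,b)=1$. $\mathbf V$ denotes variance. *)

(* Defs.v *)
From HB Require Import structures.
From mathcomp Require Import all_boot all_order all_algebra.
From mathcomp Require Import all_classical all_reals.
From mathcomp Require Import exp.
Set Implicit Arguments. Unset Strict Implicit. Unset Printing Implicit Defensive.
Import Order.TTheory GRing.Theory Num.Theory.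
Local Open Scope ring_scope.

(* The first n steps of the alpha-random walk: w j = true means step j is
   (1,0) (probability alpha), false means (0,1) (probability 1-alpha). *)
Definition step_seq (n : nat) := {ffun 'I_n -> bool}.

Section Walk.
Variable R : realType.

Definition walk_prob (alpha : R) (n : nat) (w : step_seq n) : R :=
  \prod_(j < n) (if w j then alpha else 1 - alpha).

Definition posx (n : nat) (w : step_seq n) (i : nat) : nat :=
  #|[set j : 'I_n | (j < i)%N && w j]|.
Definition posy (n : nat) (w : step_seq n) (i : nat) : nat :=
  #|[set j : 'I_n | (j < i)%N && ~~ w j]|.

Definition visible (a b : nat) : bool := gcdn a b == 1%N.

Definition Xvis (n : nat) (w : step_seq n) (i : nat) : R :=
  (visible (posx w i) (posy w i))%:R.
Definition Ssum (n : nat) (w : step_seq n) : R :=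
  \sum_(1 <= i < n.+1) Xvis w i.

Definition expect (alpha : R) (n : nat) (f : step_seq n -> R) : R :=
  \sum_(w : step_seq n) walk_prob alpha w * f w.

Definition variance (alpha : R) (n : nat) (f : step_seq n -> R) : R :=
  expect alpha (fun w => f w ^+ 2) - (expect alpha f) ^+ 2.

End Walk.

(* Main.v *)
Require Import Defs.
From HB Require Import structures.
From mathcomp Require Import all_boot all_order all_algebra.
From mathcomp Require Import all_classical all_reals.
From mathcomp Require Import exp.
From mathcomp Require Import ring lra zify.
Import Order.TTheory GRing.Theory Num.Theory.
Local Open Scope ring_scope.
Set Implicit Arguments. Unset Strict Implicit. Unset Printing Implicit Defensive.

Section Bin.
Variable R : realType.
Variable a : R.

Definition bw (m k : nat) : R := ('C(m, k))%:R * a ^+ k * (1 - a) ^+ (m - k).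

Lemma bw_out m k : (m < k)%N -> bw m k = 0.
Proof. by move=> h; rewrite /bw bin_small // mul0r mul0r. Qed.

Lemma bw0 m : bw m.+1 0 = (1 - a) * bw m 0.
Proof. by rewrite /bw !bin0 !subn0 exprS; ring. Qed.

Lemma bwS m k : bw m.+1 k.+1 = a * bw m k + (1 - a) * bw m k.+1.
Proof.
rewrite /bw binS subSS.
case: (ltnP k m) => h.
  have -> : (m - k = (m - k.+1).+1)%N by lia.
  rewrite natrD !exprS; ring.
rewrite (bin_small (n:=m) (m:=k.+1)); last by rewrite ltnS.
rewrite add0n exprS mul0r mul0r; ring.
Qed.

Lemma pascal m (G : nat -> R) :
  \sum_(0 <= k < m.+2) bw m.+1 k * G k =
  \sum_(0 <= k < m.+1) bw m k * (a * G k.+1 + (1 - a) * G k).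
Proof.
rewrite big_nat_recl // bw0.
under eq_bigr => k _ do rewrite bwS mulrDl.
rewrite big_split /=.
under [X in _ = X]eq_bigr => k _ do rewrite mulrDr.
rewrite big_split /=.
rewrite [X in _ = _ + X]big_nat_recl // [X in _ + (_ + X) = _]big_nat_recr //=.
rewrite (@bw_out m m.+1) // mulr0 mul0r addr0.
have E1 : \sum_(0 <= i < m.+1) a * bw m i * G i.+1 = \sum_(0 <= i < m.+1) bw m i * (a * G i.+1).
  by apply: eq_bigr => i _; ring.
have E2 : \sum_(0 <= i < m) (1 - a) * bw m i.+1 * G i.+1 = \sum_(0 <= i < m) bw m i.+1 * ((1 - a) * G i.+1).
  by apply: eq_bigr => i _; ring.
rewrite E1 E2; ring.
Qed.


Lemma bw_sum m : \sum_(0 <= k < m.+1) bw m k = 1.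
Proof.
elim: m => [|m IH].
  by rewrite big_nat1 /bw bin0 expr0 subnn expr0 mulr1 mulr1.
have := pascal m (fun _ => 1).
under eq_bigr => k _ do rewrite mulr1.
move=> ->.
under eq_bigr => k _ do rewrite !mulr1 addrC subrK mulr1.
exact: IH.
Qed.

Lemma bw_var m : \sum_(0 <= k < m.+1) bw m k * (k%:R - m%:R * a) ^+ 2 = m%:R * a * (1 - a).
Proof.
elim: m => [|m IH].
  by rewrite big_nat1 mul0r subr0 expr2 !mul0r mulr0.
rewrite (pascal m (fun k : nat => (k%:R - m.+1%:R * a) ^+ 2)).
have E : forall k : nat, bw m k * (a * (k.+1%:R - m.+1%:R * a) ^+ 2 + (1 - a) * (k%:R - m.+1%:R * a) ^+ 2)
   = bw m k * (k%:R - m%:R * a) ^+ 2 + bw m k * (a * (1 - a)).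
  by move=> k; rewrite -[k.+1]addn1 -[m.+1]addn1 !natrD; ring.
under eq_bigr => k _ do rewrite E.
rewrite big_split /= IH -mulr_suml bw_sum -[m.+1]addn1 natrD; ring.
Qed.

Lemma bw_B3 h l : h.+1%:R * a * bw h l = l.+1%:R * bw h.+1 l.+1.
Proof.
rewrite /bw subSS.
have := mul_bin_diag h.+1 l => /= /(congr1 (fun n : nat => n%:R : R)).
rewrite !natrM => E.
rewrite exprS.
transitivity ((h.+1%:R * 'C(h, l)%:R) * a ^+ l * a * (1 - a) ^+ (h - l)); first by ring.
rewrite E; ring.
Qed.

Lemma bw_B4 h l : (l <= h)%N -> l.+1%:R * (1 - a) * bw h l.+1 = (h%:R - l%:R) * a * bw h l.
Proof.
move=> lh; rewrite -natrB //.
case: (ltnP l h) => lh'.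
  rewrite /bw.
  have := mul_bin_left h l => /(congr1 (fun n : nat => n%:R : R)).
  rewrite !natrM => E.
  have hd : (h - l = (h - l.+1).+1)%N by lia.
  rewrite hd in E *.
  rewrite !exprS.
  transitivity ((l.+1%:R * 'C(h, l.+1)%:R) * a ^+ l * a * (1 - a) * (1 - a) ^+ (h - l.+1)); first by ring.
  rewrite E; ring.
have -> : l = h by apply/eqP; rewrite eqn_leq lh lh'.
by rewrite subnn (@bw_out h h.+1) // !mulr0 !mul0r.
Qed.

Lemma bw_diff h l : (l <= h)%N ->
  h.+1%:R * a * (1 - a) * (bw h l - bw h l.+1) = bw h.+1 l.+1 * (l.+1%:R - h.+1%:R * a).
Proof.
move=> lh.
have H3 := bw_B3 h l. have H4 := bw_B4 lh.
have nz : (l.+1%:R : R) != 0 by rewrite pnatr_eq0.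
apply: (mulfI nz); apply/eqP; rewrite -subr_eq0 -mulrBr.
set x := bw h l in H3 H4 *. set y := bw h l.+1 in H4 *. set z := bw h.+1 l.+1 in H3 *.
have -> : l.+1%:R * (h.+1%:R * a * (1 - a) * (x - y) - z * (l.+1%:R - h.+1%:R * a))
  = (l.+1%:R - h.+1%:R * a) * (h.+1%:R * a * x - l.+1%:R * z)
    - h.+1%:R * a * (l.+1%:R * (1 - a) * y - (h%:R - l%:R) * a * x).
  rewrite -[l.+1]addn1 -[h.+1]addn1 !natrD; ring.
by rewrite H3 H4 !subrr !mulr0 subrr.
Qed.

Lemma bw_ge0 m k : 0 <= a <= 1 -> 0 <= bw m k.
Proof.
move=> /andP[a0 a1]; rewrite /bw mulr_ge0 ?exprn_ge0 ?mulr_ge0 ?exprn_ge0 ?ler0n //.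
by rewrite subr_ge0.
Qed.

End Bin.

Section BinV.
Variable R : realType.
Variable a : R.
Hypothesis Ha : 0 < a < 1.

Definition Vt (h : nat) : R := \sum_(0 <= l < h.+1) `|bw a h l - bw a h l.+1|.

Lemma a01 : 0 <= a <= 1.
Proof. by case/andP: Ha => h1 h2; rewrite !ltW. Qed.

Lemma Vt_bound h : a * (1 - a) * Vt h * Num.sqrt (h.+1%:R) <= 1.
Proof.
case/andP: Ha => a0 a1.
have b0 : 0 < 1 - a by rewrite subr_gt0.
set m := h.+1.
set s := Num.sqrt (m%:R : R).
have s0 : 0 < s by rewrite sqrtr_gt0 ltr0n.
have s2 : s ^+ 2 = m%:R by rewrite sqr_sqrtr // ler0n.
have H1 : m%:R * a * (1 - a) * Vt h =
   \sum_(0 <= l < h.+1) bw a m l.+1 * `|l.+1%:R - m%:R * a|.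
  rewrite /Vt mulr_sumr; apply: eq_big_nat => l /andP[_ hl].
  have c0 : 0 <= m%:R * a * (1 - a) by rewrite !mulr_ge0 ?ler0n ?ltW.
  rewrite -{1}(ger0_norm c0) -normrM bw_diff // normrM ger0_norm //.
  exact: bw_ge0 a01.
have H2 : \sum_(0 <= l < h.+1) bw a m l.+1 * `|l.+1%:R - m%:R * a| <=
   \sum_(0 <= k < m.+1) bw a m k * `|k%:R - m%:R * a|.
  rewrite [X in _ <= X]big_nat_recl // lerDr mulr_ge0 ?normr_ge0 //.
  exact: bw_ge0 a01.
have H3 : \sum_(0 <= k < m.+1) bw a m k * `|k%:R - m%:R * a| <=
   \sum_(0 <= k < m.+1) bw a m k * (((k%:R - m%:R * a) ^+ 2 + s ^+ 2) / (2 * s)).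
  apply: ler_sum_nat => k _; apply: ler_wpM2l; first exact: bw_ge0 a01.
  set x := k%:R - m%:R * a.
  rewrite ler_pdivlMr ?mulr_gt0 //.
  have : 0 <= (`|x| - s) ^+ 2 by rewrite sqr_ge0.
  rewrite -[x ^+ 2]real_normK ?num_real //.
  move=> h0; nra.
have H4 : \sum_(0 <= k < m.+1) bw a m k * (((k%:R - m%:R * a) ^+ 2 + s ^+ 2) / (2 * s))
   = (m%:R * a * (1 - a) + s ^+ 2) / (2 * s).
  under eq_bigr => k _ do rewrite mulrA mulrDr.
  by rewrite -mulr_suml big_split /= bw_var -mulr_suml bw_sum mul1r.
have H5 : m%:R * a * (1 - a) * Vt h <= (m%:R * a * (1 - a) + s ^+ 2) / (2 * s).
  by rewrite H1 -H4; apply: le_trans H3; exact: H2.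
rewrite -s2 in H5.
have ab : a * (1 - a) <= 1 by nra.
have V0 : 0 <= Vt h by apply: sumr_ge0 => l _; exact: normr_ge0.
rewrite ler_pdivlMr ?mulr_gt0 // in H5.
have : s * (a * (1 - a) * Vt h * s) <= s * 1 by nra.
by rewrite ler_pM2l.
Qed.

End BinV.

Lemma cnt_eq d r L : (0 < d)%N ->
  (\sum_(0 <= l < L) (d %| r + l) + (r + d.-1) %/ d = (r + L + d.-1) %/ d)%N.
Proof.
move=> d0; elim: L => [|L IH]; first by rewrite big_nil add0n addn0.
rewrite big_nat_recr //= -addnA [((d %| r + L) + _)%N]addnC addnA IH.
have -> : (r + L.+1 + d.-1 = (r + L + d.-1).+1)%N by lia.
rewrite divnS // addnC.
have -> : ((r + L + d.-1).+1 = (r + L) + d)%N by lia.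
by rewrite (dvdn_addl _ (dvdnn d)).
Qed.

Lemma cnt_bound d r L : (0 < d)%N ->
  (d * \sum_(0 <= l < L) (d %| r + l) <= L + d /\ L <= d * \sum_(0 <= l < L) (d %| r + l) + d)%N.
Proof.
move=> d0; have E := cnt_eq r L d0.
set c := (\sum_(0 <= l < L) (d %| r + l))%N in E *.
set A := (r + L + d.-1)%N in E. set B := (r + d.-1)%N in E.
have eA := divn_eq A d. have eB := divn_eq B d.
have mA := ltn_pmod A d0. have mB := ltn_pmod B d0.
rewrite /A /B in eA eB mA mB E.
move: E eA eB mA mB.
set qA := ((r + L + d.-1) %/ d)%N. set qB := ((r + d.-1) %/ d)%N.
set rA := ((r + L + d.-1) %% d)%N. set rB := ((r + d.-1) %% d)%N.
move=> E eA eB mA mB.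
have -> : c = (qA - qB)%N by lia.
split; nia.
Qed.

Section Abel.
Variable R : realType.

Lemma abel (b u : nat -> R) N :
  \sum_(0 <= l < N) b l * u l =
  \sum_(0 <= l < N) (b l - b l.+1) * (\sum_(0 <= t < l.+1) u t)
  + b N * \sum_(0 <= t < N) u t.
Proof.
elim: N => [|N IH]; first by rewrite !big_nil mulr0 addr0.
rewrite !big_nat_recr //= IH.
set S := \sum_(0 <= t < N) u t.
ring.
Qed.

Lemma U_bound d r L : (0 < d)%N ->
  `|\sum_(0 <= l < L) (((d %| r + l)%:R : R) - d%:R^-1)| <= 1.
Proof.
move=> d0; have [h1 h2] := cnt_bound r L d0.
set c := (\sum_(0 <= l < L) (d %| r + l))%N in h1 h2.
rewrite big_split /= -natr_sum sumr_const_nat subn0.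
have dR : (0 : R) < d%:R by rewrite ltr0n.
rewrite -/c.
have h1' : d%:R * c%:R <= L%:R + d%:R :> R by rewrite -natrM -natrD ler_nat.
have h2' : L%:R <= d%:R * c%:R + d%:R :> R by rewrite -natrM -natrD ler_nat.
have -> : - d%:R^-1 *+ L = - (L%:R / d%:R) :> R.
  by rewrite mulNrn mulr_natl.
have e : L%:R / d%:R * d%:R = L%:R :> R by rewrite mulfVK // gt_eqF.
set x := L%:R / d%:R in e *.
rewrite ler_norml; apply/andP; split.
  have : 0 <= d%:R * (c%:R - x + 1) :> R by nra.
  by rewrite pmulr_rge0 // => h; lra.
have : 0 <= d%:R * (1 - c%:R + x) :> R by nra.
by rewrite pmulr_rge0 // => h; lra.
Qed.

End Abel.

Section Sieve.
Variable R : realType.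
Variable a : R.
Hypothesis Ha : 0 < a < 1.
Variable h : nat.

Lemma base_bound d r : (0 < d)%N ->
  `|\sum_(0 <= l < h.+1) bw a h l * (d %| r + l)%:R - d%:R^-1| <= Vt a h.
Proof.
move=> d0.
have -> : \sum_(0 <= l < h.+1) bw a h l * (d %| r + l)%:R - d%:R^-1
   = \sum_(0 <= l < h.+1) bw a h l * ((d %| r + l)%:R - d%:R^-1).
  under [X in _ = X]eq_bigr => l _ do rewrite mulrBr.
  by rewrite sumrB -mulr_suml bw_sum mul1r.
rewrite abel (@bw_out _ a h h.+1) // mul0r addr0.
apply: le_trans (ler_norm_sum _ _ _) _.
rewrite /Vt; apply: ler_sum_nat => l _.
rewrite normrM -[X in _ <= X]mulr1 ler_wpM2l ?normr_ge0 //.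
exact: U_bound.
Qed.

Lemma sieve (ps : seq nat) : uniq ps -> all prime ps ->
  forall d, (0 < d)%N -> all (fun p => ~~ (p %| d)%N) ps -> forall r,
  `|\sum_(0 <= l < h.+1) bw a h l * ((d %| r + l)%:R * \prod_(p <- ps) (1 - ((p %| r + l)%N)%:R))
    - d%:R^-1 * \prod_(p <- ps) (1 - p%:R^-1)| <= 2 ^+ (size ps) * Vt a h.
Proof.
elim: ps => [|p ps IH] /=.
  move=> _ _ d d0 _ r.
  under eq_bigr => l _ do rewrite big_nil mulr1.
  by rewrite big_nil mulr1 expr0 mul1r; exact: base_bound.
case/andP=> pnin u /andP[pp pps] d d0 /andP[pnd nd] r.
have cop : coprime d p by rewrite coprime_sym prime_coprime.
have dp0 : (0 < d * p)%N by rewrite muln_gt0 d0 prime_gt0.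
have ndp : all (fun q => ~~ (q %| d * p)%N) ps.
  apply/allP => q qin; move/allP: pps => /(_ q qin) qp.
  rewrite Euclid_dvdM // negb_or (allP nd q qin) /= dvdn_prime2 //.
  by apply: contra pnin => /eqP <-.
have H1 := IH u pps d d0 nd r.
have H2 := IH u pps (d * p)%N dp0 ndp r.
have -> : \sum_(0 <= l < h.+1) bw a h l * ((d %| r + l)%:R * \prod_(q <- (p :: ps)) (1 - ((q %| r + l)%N)%:R))
   = \sum_(0 <= l < h.+1) bw a h l * ((d %| r + l)%:R * \prod_(q <- ps) (1 - ((q %| r + l)%N)%:R))
   - \sum_(0 <= l < h.+1) bw a h l * (((d * p) %| r + l)%N%:R * \prod_(q <- ps) (1 - ((q %| r + l)%N)%:R)).
  rewrite -sumrB; apply: eq_bigr => l _.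
  rewrite big_cons Gauss_dvd //.
  by case: (d %| r + l)%N; case: (p %| r + l)%N => /=; ring.
have -> : d%:R^-1 * \prod_(q <- (p :: ps)) (1 - q%:R^-1)
   = d%:R^-1 * \prod_(q <- ps) (1 - q%:R^-1) - (d * p)%:R^-1 * \prod_(q <- ps) (1 - q%:R^-1) :> R.
  rewrite big_cons natrM invfM; ring.
set S1 := \sum_(_ <= _ < _) _ in H1 *.
set S2 := \sum_(_ <= _ < _) _ in H2 *.
set T1 := _ * \prod_(q <- ps) _ in H1 *.
set T2 := _ * \prod_(q <- ps) _ in H2 *.
have -> : S1 - S2 - (T1 - T2) = (S1 - T1) - (S2 - T2) by ring.
apply: le_trans (ler_normB _ _) _.
rewrite exprS; lra.
Qed.

End Sieve.


Definition fcons n (b : bool) (w : step_seq n) : step_seq n.+1 :=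
  [ffun j : 'I_n.+1 => if unlift ord0 j is Some j' then w j' else b].
Definition ftail n (w : step_seq n.+1) : step_seq n := [ffun j => w (lift ord0 j)].

Lemma fcons0 n b (w : step_seq n) : fcons b w ord0 = b.
Proof. by rewrite ffunE unlift_none. Qed.

Lemma fconsS n b (w : step_seq n) j : fcons b w (lift ord0 j) = w j.
Proof. by rewrite ffunE liftK. Qed.

Lemma fcons_tail n (w : step_seq n.+1) : fcons (w ord0) (ftail w) = w.
Proof.
apply/ffunP => j; rewrite ffunE.
case: (unliftP ord0 j) => [j' ->|->] //.
by rewrite ffunE.
Qed.

Lemma tail_fcons n b (w : step_seq n) : ftail (fcons b w) = w.
Proof. by apply/ffunP => j; rewrite ffunE fconsS. Qed.

Lemma sum_split (R : realType) n (F : step_seq n.+1 -> R) :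
  \sum_(w : step_seq n.+1) F w = \sum_(b : bool) \sum_(w : step_seq n) F (fcons b w).
Proof.
rewrite pair_bigA /=.
rewrite (reindex (fun p : bool * step_seq n => fcons p.1 p.2)) //.
exists (fun w : step_seq n.+1 => (w ord0, ftail w)).
  by move=> [b w] _ /=; rewrite fcons0 tail_fcons.
by move=> w _ /=; rewrite fcons_tail.
Qed.

Lemma posxE n (w : step_seq n) i : posx w i = (\sum_(j < n) ((j < i)%N && w j))%N.
Proof.
rewrite /posx -sum1_card.
rewrite (eq_bigl (fun j : 'I_n => (j < i)%N && w j)); last by move=> j; rewrite inE.
rewrite big_mkcond /=; apply: eq_bigr => j _.
by case: (_ && _).
Qed.

Lemma posx0 n (w : step_seq n) : posx w 0 = 0%N.
Proof. by rewrite posxE big1. Qed.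

Lemma posx_fcons n b (w : step_seq n) i : posx (fcons b w) i.+1 = (b + posx w i)%N.
Proof.
rewrite !posxE big_ord_recl fcons0 /=.
congr (_ + _)%N; apply: eq_bigr => j _.
by rewrite fconsS /bump leq0n add1n ltnS.
Qed.



Lemma sum_ord_lt n i : (i <= n)%N -> (\sum_(j < n) nat_of_bool (j < i)%N)%N = i.
Proof.
elim: n i => [|n IH] i hi.
  by rewrite big_ord0; move: hi; rewrite leqn0 => /eqP.
rewrite big_ord_recl /=.
case: i hi => [|i] hi.
  by rewrite big1.
rewrite /= add1n; congr _.+1.
rewrite -[RHS](IH i) //; apply: eq_bigr => j _.

Qed.

Lemma posxy n (w : step_seq n) i : (i <= n)%N -> (posx w i + posy w i)%N = i.
Proof.
move=> hi.
have -> : posy w i = (\sum_(j < n) ((j < i)%N && ~~ w j))%N.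
  rewrite /posy -sum1_card.
  rewrite (eq_bigl (fun j : 'I_n => (j < i)%N && ~~ w j)); last by move=> j; rewrite inE.
  rewrite big_mkcond /=; apply: eq_bigr => j _.
  by case: (_ && _).
rewrite posxE -big_split /=.
rewrite -[RHS](sum_ord_lt hi); apply: eq_bigr => j _.
by case: (j < i)%N; case: (w j).
Qed.

Section WP.
Variable R : realType.
Variable a : R.

Lemma bw00 : bw a 0 0 = 1.
Proof. by rewrite /bw bin0 !expr0 !mulr1. Qed.

Lemma wp_fcons n b (w : step_seq n) :
  walk_prob a (fcons b w) = (if b then a else 1 - a) * walk_prob a w.
Proof.
rewrite /walk_prob big_ord_recl fcons0; congr (_ * _).
by apply: eq_bigr => j _; rewrite fconsS.
Qed.

Lemma sum_seq0 (F : step_seq 0 -> R) : \sum_(w : step_seq 0) F w = F [ffun j => false].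
Proof.
rewrite (eq_bigr (fun _ => F [ffun j => false])).
  by rewrite sumr_const card_ffun card_ord expn0 /= mulr1n.
move=> w _; congr F; apply/ffunP => j; case: j => j hj.
by [].
Qed.

Lemma joint n i j (F : nat -> nat -> R) : (i <= j)%N -> (j <= n)%N ->
  \sum_(w : step_seq n) walk_prob a w * F (posx w i) (posx w j) =
  \sum_(0 <= k < i.+1) bw a i k * \sum_(0 <= l < (j - i).+1) bw a (j - i) l * F k (k + l)%N.
Proof.
elim: n i j F => [|n IH] i j F hij hjn.
  move: hjn; rewrite leqn0 => /eqP ej; subst j.
  move: hij; rewrite leqn0 => /eqP ei; subst i.
  by rewrite sum_seq0 !posx0 !big_nat1 /walk_prob big_ord0 subnn bw00 addn0 !mul1r.
rewrite sum_split big_bool /=.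
case: j hij hjn => [|j] hij hjn.
  move: hij; rewrite leqn0 => /eqP ei; subst i.
  rewrite (eq_bigr (fun w => a * (walk_prob a w * F 0%N 0%N))); last first.
    by move=> w _; rewrite wp_fcons !posx0 mulrA.
  rewrite [X in _ + X = _](eq_bigr (fun w => (1 - a) * (walk_prob a w * F 0%N 0%N))); last first.
    by move=> w _; rewrite wp_fcons !posx0 mulrA.
  have := IH 0%N 0%N (fun _ _ => F 0%N 0%N) (leqnn 0) (leq0n n).
  rewrite /= !big_nat1 subnn bw00 !mul1r => E.
  rewrite -!mulr_sumr E; ring.
case: i hij => [|i] hij.
  rewrite (eq_bigr (fun w => a * (walk_prob a w * F 0%N (true + posx w j)%N))); last first.
    by move=> w _; rewrite wp_fcons posx0 posx_fcons mulrA.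
  rewrite [X in _ + X = _](eq_bigr (fun w => (1 - a) * (walk_prob a w * F 0%N (false + posx w j)%N))); last first.
    by move=> w _; rewrite wp_fcons posx0 posx_fcons mulrA.
  have E := fun b : bool => IH 0%N j (fun _ m => F 0%N (b + m)%N) (leq0n j) hjn.
  have E1 := E true. have E2 := E false.
  rewrite /= !big_nat1 bw00 !mul1r !subn0 in E1 E2.
  rewrite -!mulr_sumr E1 E2 !big_nat1 bw00 !mul1r !subn0.
  rewrite (pascal a j (fun m => F 0%N m)) !mulr_sumr -big_split /=.
  apply: eq_bigr => l _; rewrite !add0n add1n; ring.
rewrite (eq_bigr (fun w => a * (walk_prob a w * F (true + posx w i)%N (true + posx w j)%N))); last first.
  by move=> w _; rewrite wp_fcons !posx_fcons mulrA.
rewrite [X in _ + X = _](eq_bigr (fun w => (1 - a) * (walk_prob a w * F (false + posx w i)%N (false + posx w j)%N))); last first.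
  by move=> w _; rewrite wp_fcons !posx_fcons mulrA.
have E := fun b : bool => IH i j (fun k m => F (b + k)%N (b + m)%N) hij hjn.
have E1 := E true. have E2 := E false.
rewrite /= in E1 E2.
rewrite -!mulr_sumr E1 E2 subSS.
rewrite (pascal a i (fun k => \sum_(0 <= l < (j - i).+1) bw a (j - i) l * F k (k + l)%N)).
rewrite !mulr_sumr -big_split /=.
apply: eq_bigr => k _.
rewrite !add1n !add0n.
have -> : \sum_(0 <= l < (j - i).+1) bw a (j - i) l * F k.+1 (k + l).+1 =
  \sum_(0 <= l < (j - i).+1) bw a (j - i) l * F k.+1 (k.+1 + l)%N.
  by apply: eq_bigr => l _; rewrite addSn.
ring.
Qed.


End WP.

Lemma coprime_hasE m j : (0 < j)%N ->
  coprime m j = ~~ has (fun p => p %| m)%N (primes j).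
Proof.
move=> j0; case: m => [|m].
  rewrite /coprime gcd0n (eq_has (a2 := predT)); last by move=> p; rewrite dvdn0.
  rewrite has_predT lt0n size_eq0 primes_eq0.
  by case: j j0 => [|[|j]].
rewrite coprime_has_primes //; congr (~~ _); apply: eq_in_has => p.
rewrite !mem_primes /= => /andP[pp _].
by rewrite pp.
Qed.

Lemma visibleE m j : (m <= j)%N -> visible m (j - m) = coprime m j.
Proof.
move=> mj; rewrite /visible /coprime.
by rewrite -{2}(subnK mj) gcdnDr.
Qed.

Section Cov.
Variable R : realType.

Lemma prod_notE (s : seq nat) (P : pred nat) :
  \prod_(p <- s) (1 - (P p)%:R) = (~~ has P s)%:R :> R.
Proof.
elim: s => [|p s IH]; first by rewrite big_nil.
rewrite big_cons IH /=; case: (P p) => /=; rewrite ?subrr ?mul0r //.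
by rewrite subr0 mul1r.
Qed.

Lemma coprime_prod m j : (0 < j)%N ->
  (coprime m j)%:R = \prod_(p <- primes j) (1 - ((p %| m)%N)%:R) :> R.
Proof. by move=> j0; rewrite (prod_notE _ (fun p => p %| m)%N) coprime_hasE. Qed.

Lemma cov_abstract N (w f G : nat -> R) (g e : R) :
  (forall k, 0 <= w k) -> \sum_(0 <= k < N) w k = 1 ->
  (forall k, 0 <= f k <= 1) ->
  (forall k, (k < N)%N -> `|G k - g| <= e) ->
  `|\sum_(0 <= k < N) w k * f k * G k
    - (\sum_(0 <= k < N) w k * f k) * (\sum_(0 <= k < N) w k * G k)| <= 2 * e.
Proof.
move=> w0 ws f01 Ge.
set Gb := \sum_(0 <= k < N) w k * G k.
have -> : \sum_(0 <= k < N) w k * f k * G k - (\sum_(0 <= k < N) w k * f k) * Gb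
  = \sum_(0 <= k < N) w k * f k * (G k - Gb).
  rewrite mulr_suml -sumrB; apply: eq_bigr => k _; ring.
have HG : forall k, (k < N)%N -> `|G k - Gb| <= 2 * e.
  move=> k kN.
  have -> : G k - Gb = \sum_(0 <= k' < N) w k' * (G k - G k').
    rewrite /Gb -[G k in LHS]mul1r -ws mulr_suml -sumrB; apply: eq_bigr => k' _; ring.
  apply: le_trans (ler_norm_sum _ _ _) _.
  rewrite (_ : 2 * e = \sum_(0 <= k < N) w k * (2 * e)); last by rewrite -mulr_suml ws mul1r.
  apply: ler_sum_nat => k' /andP[_ k'N].
  rewrite normrM ger0_norm //.
  have hh : `|G k - G k'| <= 2 * e.
    have -> : G k - G k' = (G k - g) - (G k' - g) by ring.
    apply: le_trans (ler_normB _ _) _.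
    have := Ge k kN; have := Ge k' k'N; lra.
  have := w0 k'; nra.
apply: le_trans (ler_norm_sum _ _ _) _.
rewrite (_ : 2 * e = \sum_(0 <= k < N) w k * (2 * e)); last by rewrite -mulr_suml ws mul1r.
apply: ler_sum_nat => k /andP[_ kN].
rewrite normrM mulrC.
have wf0 : 0 <= w k * f k by case/andP: (f01 k) => h1 h2; rewrite mulr_ge0.
rewrite (ger0_norm wf0).
have := HG k kN => hk.
have e0 : 0 <= 2 * e by apply: le_trans hk.
case/andP: (f01 k) => h1 h2.
have := w0 k => hw.
have n0 : 0 <= `|G k - Gb| by exact: normr_ge0.
have t1 : f k * `|G k - Gb| <= 2 * e by nra.
have -> : `|G k - Gb| * (w k * f k) = w k * (f k * `|G k - Gb|) by ring.
by apply: ler_wpM2l.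
Qed.

End Cov.

Section CovB.
Variable R : realType.
Variable a : R.
Hypothesis Ha : 0 < a < 1.

Definition fv (i k : nat) : R := (visible k (i - k))%:R.

Lemma Xvis_fv n (w : step_seq n) i : (i <= n)%N -> Xvis R w i = fv i (posx w i).
Proof.
move=> hi; rewrite /Xvis /fv; congr ((visible _ _)%:R).
by have := posxy w hi; lia.
Qed.

Definition cov n (i j : nat) : R :=
  expect a (fun w : step_seq n => Xvis R w i * Xvis R w j)
  - expect a (fun w : step_seq n => Xvis R w i) * expect a (fun w : step_seq n => Xvis R w j).

Lemma fv01 i k : 0 <= fv i k <= 1.
Proof. by rewrite /fv; case: (visible _ _) => /=; rewrite ?lexx ?ler01. Qed.

Lemma cov_bound n i j : (i < j)%N -> (j <= n)%N ->
  `|cov n i j| <= 2 * (2 ^+ size (primes j) * Vt a (j - i)).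
Proof.
move=> ij jn.
have iln : (i <= n)%N by apply: leq_trans (ltnW ij) jn.
have ij' : (i <= j)%N by exact: ltnW.
set h := (j - i)%N.
set G := fun k => \sum_(0 <= l < h.+1) bw a h l * fv j (k + l)%N.
have E1 : expect a (fun w : step_seq n => Xvis R w i * Xvis R w j)
   = \sum_(0 <= k < i.+1) bw a i k * fv i k * G k.
  rewrite /expect.
  rewrite (eq_bigr (fun w => walk_prob a w * (fun k m => fv i k * fv j m) (posx w i) (posx w j))); last first.
    by move=> w _; rewrite (Xvis_fv w iln) (Xvis_fv w jn).
  rewrite (joint a (fun k m => fv i k * fv j m) ij' jn) -/h.
  apply: eq_bigr => k _; rewrite /G mulr_sumr [RHS]mulr_sumr; apply: eq_bigr => l _; ring.
have E2 : expect a (fun w : step_seq n => Xvis R w i) = \sum_(0 <= k < i.+1) bw a i k * fv i k.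
  rewrite /expect.
  rewrite (eq_bigr (fun w => walk_prob a w * (fun k m => fv i k) (posx w i) (posx w j))); last first.
    by move=> w _; rewrite (Xvis_fv w iln).
  rewrite (joint a (fun k m => fv i k) ij' jn) -/h.
  apply: eq_bigr => k _; rewrite -mulr_suml bw_sum mul1r //.
have E3 : expect a (fun w : step_seq n => Xvis R w j) = \sum_(0 <= k < i.+1) bw a i k * G k.
  rewrite /expect.
  rewrite (eq_bigr (fun w => walk_prob a w * (fun k m => fv j m) (posx w i) (posx w j))); last first.
    by move=> w _; rewrite (Xvis_fv w jn).
  by rewrite (joint a (fun k m => fv j m) ij' jn) -/h.
rewrite /cov E1 E2 E3.
apply: (cov_abstract (g := \prod_(p <- primes j) (1 - p%:R^-1))).
- by move=> k; apply: bw_ge0; exact: a01.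
- exact: bw_sum.
- by move=> k; exact: fv01.
move=> k kN.
have j0 : (0 < j)%N by apply: leq_ltn_trans ij.
have -> : G k = \sum_(0 <= l < h.+1) bw a h l * ((1 %| k + l)%N%:R * \prod_(p <- primes j) (1 - ((p %| k + l)%N)%:R)).
  apply: eq_big_nat => l /andP[_ lh].
  rewrite dvd1n mul1r /fv visibleE ?coprime_prod //.
  rewrite /h in lh; lia.
have := @sieve R a h (primes j) (primes_uniq j) _ 1%N (ltn0Sn 0) _ k.
rewrite invr1 mul1r; apply.
  by apply/allP => p; rewrite mem_primes => /andP[].
apply/allP => p; rewrite mem_primes => /andP[pp _].
by rewrite dvdn1; apply/eqP => e; move: pp; rewrite e.
Qed.

End CovB.

Section Fin.
Variable R : realType.
Variable a : R.
Hypothesis Ha : 0 < a < 1.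

Lemma var_expand n :
  variance a (@Ssum R n) = \sum_(1 <= i < n.+1) \sum_(1 <= j < n.+1) cov a n i j.
Proof.
rewrite /variance /cov /expect /Ssum.
rewrite (eq_bigr (fun w => \sum_(1 <= i < n.+1) \sum_(1 <= j < n.+1) walk_prob a w * (Xvis R w i * Xvis R w j))); last first.
  move=> w _; rewrite expr2 mulr_suml mulr_sumr; apply: eq_bigr => i _.
  by rewrite mulr_sumr mulr_sumr; apply: eq_bigr => j _.
rewrite [X in _ - X ^+ 2](eq_bigr (fun w => \sum_(1 <= i < n.+1) walk_prob a w * Xvis R w i)); last first.
  by move=> w _; rewrite mulr_sumr.
rewrite [X in _ - X ^+ 2]exchange_big /= expr2 mulr_suml.
rewrite exchange_big /= -sumrB; apply: eq_bigr => i _.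
rewrite exchange_big /= mulr_sumr -sumrB; apply: eq_bigr => j _.
by [].
Qed.

Lemma wp_ge0 n (w : step_seq n) : 0 <= walk_prob a w.
Proof.
case/andP: Ha => a0 a1.
rewrite /walk_prob; apply: prodr_ge0 => j _; case: (w j); rewrite ?subr_ge0 ltW //.
Qed.

Lemma wp_sum n : \sum_(w : step_seq n) walk_prob a w = 1.
Proof.
have := joint a (fun _ _ => 1) (leq0n 0) (leq0n n).
rewrite /= !big_nat1 bw00 !mulr1 => E.
by rewrite -E; apply: eq_bigr => w _; rewrite mulr1.
Qed.

Lemma cov_diag n i : cov a n i i <= 1.
Proof.
rewrite /cov /expect.
have h1 : \sum_(w : step_seq n) walk_prob a w * (Xvis R w i * Xvis R w i) <= 1.
  rewrite -(wp_sum n); apply: ler_sum => w _.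
  rewrite -[X in _ <= X]mulr1; apply: ler_wpM2l; first exact: wp_ge0.
  by rewrite /Xvis; case: (visible _ _) => /=; rewrite ?mul1r ?mul0r ?ler01.
have := sqr_ge0 (\sum_(w : step_seq n) walk_prob a w * Xvis R w i).
rewrite expr2; lra.
Qed.

Lemma cov_sym n i j : cov a n i j = cov a n j i.
Proof.
rewrite /cov /expect; congr (_ - _); last by rewrite mulrC.
by apply: eq_bigr => w _; rewrite [Xvis R w j * _]mulrC.
Qed.

End Fin.

Section Analytic.
Variable R : realType.

Lemma sqrt_sum j : \sum_(0 <= i < j) (Num.sqrt ((j - i)%:R : R))^-1 <= 2 * Num.sqrt (j%:R).
Proof.
elim: j => [|j IH]; first by rewrite big_nil sqrtr0 mulr0.
rewrite big_nat_recl // subn0.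
rewrite (eq_bigr (fun i => (Num.sqrt ((j - i)%:R : R))^-1)); last by move=> i _; rewrite subSS.
set x := Num.sqrt (j%:R : R). set y := Num.sqrt (j.+1%:R : R).
have x0 : 0 <= x by exact: sqrtr_ge0.
have y0 : 0 < y by rewrite sqrtr_gt0 ltr0n.
have x2 : x ^+ 2 = j%:R by rewrite sqr_sqrtr // ler0n.
have y2 : y ^+ 2 = j%:R + 1 by rewrite sqr_sqrtr ?ler0n // -natr1.
have key : y^-1 <= 2 * y - 2 * x.
  rewrite -[y^-1]mul1r ler_pdivrMr //.
  have : 0 <= (y - x) ^+ 2 by exact: sqr_ge0.
  nra.
have IH2 : \sum_(0 <= i < j) (Num.sqrt ((j - i)%:R : R))^-1 <= 2 * x by exact: IH.
lra.
Qed.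

Lemma ln2_ge : 1 / 2 <= ln (2 : R).
Proof.
have hx : (-1 : R) < - (1 / 2) by lra.
have h := @le_ln1Dx R (- (1 / 2)) hx.
have e : (1 + - (1 / 2) : R) = 2^-1 by field.
rewrite e lnV ?posrE // in h.
lra.
Qed.

Lemma harmonic n : \sum_(1 <= d < n.+2) (d%:R : R)^-1 <= 1 + ln (n.+1%:R).
Proof.
elim: n => [|n IH].
  by rewrite big_nat1 invr1 ln1 addr0.
rewrite big_nat_recr //=.
suff h : (n.+2%:R : R)^-1 <= ln (n.+2%:R) - ln (n.+1%:R).
  apply: le_trans (lerD IH h) _.
  by rewrite -addrA (addrC (ln _)) subrK.
have p1 : (0 : R) < n.+1%:R by rewrite ltr0n.
have p2 : (0 : R) < n.+2%:R by rewrite ltr0n.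
set u := (n.+2%:R : R)^-1.
have u0 : 0 < u by rewrite invr_gt0.
have u1 : u < 1 by rewrite invf_lt1 // ltr1n.
have hx : (-1 : R) < - u by lra.
have h := @le_ln1Dx R (- u) hx.
have e : 1 + - u = n.+1%:R / n.+2%:R.
  rewrite /u -[n.+2]addn1 natrD; field.
  apply/eqP => h0; have hn : (0:R) <= n%:R by exact: ler0n.
  lra.
rewrite e ln_div ?posrE // in h.
lra.
Qed.

End Analytic.

Lemma size_add_divisors p e D : size (PrimeDecompAux.add_divisors (p, e) D) = (e.+1 * size D)%N.
Proof.
rewrite /PrimeDecompAux.add_divisors; elim: e => [|e IH] /=; first by rewrite mul1n.
by rewrite size_merge size_cat size_map IH mulSn addnC.
Qed.

Lemma pow2_le_divisors x : (0 < x)%N -> (2 ^ size (primes x) <= size (divisors x))%N.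
Proof.
move=> x0; rewrite /divisors prime_decompE.
have : all (fun p => 0 < logn p x)%N (primes x).
  by apply/allP => p pin; rewrite logn_gt0.
elim: (primes x) => [|p s IH] //= /andP[lp ls].
rewrite size_add_divisors expnS.
apply: leq_mul; last exact: IH.
by rewrite ltnS.
Qed.

Lemma divisors_le x n : (0 < x)%N -> (x <= n)%N ->
  (size (divisors x) <= \sum_(1 <= d < n.+1) (d %| x))%N.
Proof.
move=> x0 xn.
have -> : (\sum_(1 <= d < n.+1) (d %| x) = count (fun d => d %| x)%N (iota 1 n))%N.
  rewrite -sum1_count /index_iota subSS subn0.
  elim: (iota 1 n) => [|d s IH]; first by rewrite !big_nil.
  by rewrite !big_cons IH; case: (d %| x)%N.
rewrite -size_filter; apply: uniq_leq_size; first exact: divisors_uniq.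
move=> d; rewrite -dvdn_divisors // => dx.
rewrite mem_filter dx /= mem_iota.
have d0 : (0 < d)%N by apply: dvdn_gt0 dx; exact: x0.
have := dvdn_leq x0 dx; lia.
Qed.

Section Tau.
Variable R : realType.

Lemma cnt_real d n : (0 < d)%N ->
  \sum_(1 <= x < n.+1) ((d %| x)%N%:R : R) <= n%:R / d%:R + 1.
Proof.
move=> d0; have [h1 _] := cnt_bound 1 n d0.
rewrite -natr_sum big_add1 /=.
have -> : (\sum_(0 <= i < n) (d %| i.+1) = \sum_(0 <= l < n) (d %| 1 + l))%N.
  by apply: eq_bigr => i _; rewrite add1n.
set c := (\sum_(0 <= l < n) (d %| 1 + l))%N in h1 *.
have dR : (0 : R) < d%:R by rewrite ltr0n.
have h1' : d%:R * c%:R <= n%:R + d%:R :> R by rewrite -natrM -natrD ler_nat.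
rewrite -(ler_pM2l dR) mulrDr mulr1 mulrCA mulfV ?gt_eqF // mulr1.
exact: h1'.
Qed.

Lemma Tsum m : \sum_(1 <= x < m.+2) (2 ^+ size (primes x) : R) <= m.+1%:R * (2 + ln (m.+1%:R)).
Proof.
set n := m.+1.
have step1 : \sum_(1 <= x < n.+1) (2 ^+ size (primes x) : R)
    <= \sum_(1 <= x < n.+1) \sum_(1 <= d < n.+1) ((d %| x)%N%:R : R).
  apply: ler_sum_nat => x /andP[x1 xn].
  rewrite -natr_sum -natrX ler_nat.
  apply: leq_trans (pow2_le_divisors x1) _.
  by apply: divisors_le; rewrite // -ltnS.
apply: le_trans step1 _.
rewrite exchange_big /=.
apply: le_trans (_ : _ <= \sum_(1 <= d < n.+1) (n%:R / d%:R + 1)) _.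
  apply: ler_sum_nat => d /andP[d1 _]; exact: cnt_real.
rewrite big_split /= sumr_const_nat subn1 /=.
rewrite -mulr_sumr.

have H := harmonic R m.
have n0 : (0 : R) <= n%:R by exact: ler0n.
have : n%:R * \sum_(1 <= d < n.+1) (d%:R : R)^-1 <= n%:R * (1 + ln n%:R) by apply: ler_wpM2l.
move=> h2.
have -> : n%:R * (2 + ln n%:R) = n%:R * (1 + ln n%:R) + n%:R :> R by ring.

by apply: lerD.
Qed.

End Tau.

Section Final.
Variable R : realType.
Variable a : R.
Hypothesis Ha : 0 < a < 1.

Definition K0 : R := (a * (1 - a))^-1.
Definition Tw (m : nat) : R := 2 ^+ size (primes m).

Lemma K0_gt0 : 0 < K0.
Proof. by case/andP: Ha => h1 h2; rewrite /K0 invr_gt0 mulr_gt0 // subr_gt0. Qed.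

Lemma Tw_ge0 m : 0 <= Tw m.
Proof. by rewrite /Tw exprn_ge0 // ler0n. Qed.

Lemma Vt_le h : (0 < h)%N -> Vt a h <= K0 * (Num.sqrt (h%:R : R))^-1.
Proof.
move=> h0.
have := Vt_bound Ha h.
case/andP: Ha => a0 a1.
set s := Num.sqrt (h%:R : R). set t := Num.sqrt (h.+1%:R : R).
have s0 : 0 < s by rewrite sqrtr_gt0 ltr0n.
have st : s <= t by rewrite ler_sqrt ?ler0n // ler_nat.
have t0 : 0 < t by apply: lt_le_trans st.
have ab : 0 < a * (1 - a) by rewrite mulr_gt0 // subr_gt0.
move=> H.
rewrite /K0 -invfM -[X in _ <= X]mul1r ler_pdivlMr ?mulr_gt0 //.
have V0 : 0 <= Vt a h by apply: sumr_ge0 => l _; exact: normr_ge0.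
have : a * (1 - a) * Vt a h * s <= a * (1 - a) * Vt a h * t.
  by apply: ler_wpM2l => //; rewrite mulr_ge0 // ltW.
move=> H2.
have -> : Vt a h * (a * (1 - a) * s) = a * (1 - a) * Vt a h * s by ring.
exact: le_trans H2 H.
by rewrite subr_gt0.
Qed.

Lemma pair_le n i j : (i < j)%N -> (j <= n)%N ->
  cov a n i j <= 2 * K0 * Tw j * (Num.sqrt ((j - i)%:R : R))^-1.
Proof.
move=> ij jn.
apply: le_trans (ler_norm _) _.
apply: le_trans (cov_bound Ha ij jn) _.
have h0 : (0 < j - i)%N by rewrite subn_gt0.
have := Vt_le h0 => hV.
have T0 := Tw_ge0 j.
rewrite -/(Tw j).
have -> : 2 * K0 * Tw j * (Num.sqrt ((j - i)%:R : R))^-1 = 2 * (Tw j * (K0 * (Num.sqrt ((j - i)%:R : R))^-1)) by ring.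
apply: ler_wpM2l => //; apply: ler_wpM2l => //.
Qed.


Lemma inner_bound n j : (j <= n)%N ->
  \sum_(1 <= i < n.+1) (if (i < j)%N then (Num.sqrt ((j - i)%:R : R))^-1 else 0)
  <= 2 * Num.sqrt (n%:R : R).
Proof.
move=> jn.
set f := fun i : nat => if (i < j)%N then (Num.sqrt ((j - i)%:R : R))^-1 else 0.
have f0 : forall i, 0 <= f i.
  by move=> i; rewrite /f; case: (i < j)%N; rewrite ?invr_ge0 ?sqrtr_ge0.
have e1 : \sum_(1 <= i < n.+1) f i <= \sum_(0 <= i < n.+1) f i.
  by rewrite big_add1 [X in _ <= X]big_nat_recl //= lerDr.
apply: le_trans e1 _.
have e2 : \sum_(0 <= i < n.+1) f i = \sum_(0 <= i < j) (Num.sqrt ((j - i)%:R : R))^-1.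
  rewrite (big_nat_widen 0 j n.+1); last exact: leqW jn.
  rewrite [RHS]big_mkcond /=.
  by apply: eq_bigr => i _; rewrite /f; case: (i < j)%N.
rewrite e2; apply: le_trans (sqrt_sum R j) _.
by rewrite ler_wpM2l // ler_sqrt ?ler0n // ler_nat.
Qed.

Definition P2 (i j : nat) : R :=
  if (i < j)%N then 2 * K0 * Tw j * (Num.sqrt ((j - i)%:R : R))^-1 else 0.

Lemma S2_bound n :
  \sum_(1 <= i < n.+1) \sum_(1 <= j < n.+1) P2 i j
  <= 4 * K0 * Num.sqrt (n%:R : R) * \sum_(1 <= x < n.+1) Tw x.
Proof.
rewrite exchange_big /= mulr_sumr.
apply: ler_sum_nat => j /andP[_ jn].
have -> : \sum_(1 <= i < n.+1) P2 i j =
  2 * K0 * Tw j * \sum_(1 <= i < n.+1) (if (i < j)%N then (Num.sqrt ((j - i)%:R : R))^-1 else 0).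
  rewrite mulr_sumr; apply: eq_bigr => i _; rewrite /P2; case: (i < j)%N => //.
  by rewrite mulr0.
have := inner_bound (n := n) (j := j).
rewrite ltnS in jn; move/(_ jn) => H.
have c0 : 0 <= 2 * K0 * Tw j by rewrite mulr_ge0 ?Tw_ge0 // mulr_ge0 // ltW // K0_gt0.
apply: le_trans (ler_wpM2l c0 H) _.
have -> : 4 * K0 * Num.sqrt (n%:R : R) * Tw j = 2 * K0 * Tw j * (2 * Num.sqrt (n%:R : R)) by ring.
by [].
Qed.

Lemma var_le n :
  variance a (@Ssum R n) <= n%:R + 8 * K0 * Num.sqrt (n%:R : R) * \sum_(1 <= x < n.+1) Tw x.
Proof.
rewrite var_expand.
set P1 := fun i j : nat => if i == j then (1 : R) else 0.
have step : \sum_(1 <= i < n.+1) \sum_(1 <= j < n.+1) cov a n i j <=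
   \sum_(1 <= i < n.+1) \sum_(1 <= j < n.+1) (P1 i j + P2 i j + P2 j i).
  apply: ler_sum_nat => i /andP[_ iN]; apply: ler_sum_nat => j /andP[_ jN].
  rewrite /P1 /P2; case: (ltngtP i j) => [ij|ji|->].
  - by rewrite add0r addr0; apply: pair_le.
  - by rewrite !add0r cov_sym; apply: pair_le.
  - by rewrite !addr0; exact: cov_diag.
apply: le_trans step _.
rewrite (eq_bigr (fun i => \sum_(1 <= j < n.+1) P1 i j + \sum_(1 <= j < n.+1) P2 i j + \sum_(1 <= j < n.+1) P2 j i)); last first.
  by move=> i _; rewrite !big_split.
rewrite !big_split /=.
have S1 : \sum_(1 <= i < n.+1) \sum_(1 <= j < n.+1) P1 i j = n%:R.
  transitivity (\sum_(1 <= i < n.+1) (1 : R)); last by rewrite sumr_const_nat subn1.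
  apply: eq_big_nat => i /andP[i1 iN].
  rewrite /P1 -big_mkcond /= (eq_bigl (fun j => j == i)); last by move=> j; rewrite eq_sym.
  by rewrite big_nat1_eq i1 iN.
have S3 : \sum_(1 <= i < n.+1) \sum_(1 <= j < n.+1) P2 j i = \sum_(1 <= i < n.+1) \sum_(1 <= j < n.+1) P2 i j.
  by rewrite exchange_big.
rewrite S1 S3.
have := S2_bound n => H.
have -> : 8 * K0 * Num.sqrt (n%:R : R) * \sum_(1 <= x < n.+1) Tw x
   = 4 * K0 * Num.sqrt (n%:R : R) * \sum_(1 <= x < n.+1) Tw x + 4 * K0 * Num.sqrt (n%:R : R) * \sum_(1 <= x < n.+1) Tw x by ring.
rewrite -addrA; apply: lerD => //; exact: lerD.
Qed.

End Final.

Unset Implicit Arguments.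

Theorem proposition2 (R : realType) (alpha : R) :
  0 < alpha < 1 ->
  exists C : R, 0 < C /\
    forall n : nat, (2 <= n)%N ->
      variance alpha (@Ssum R n) <=
        C * (n%:R * Num.sqrt (n%:R)) * ln (n%:R).
Proof.
move=> Ha.
have K0p := K0_gt0 Ha.
exists (2 + 40 * K0 alpha); split.
  by rewrite addr_gt0 // mulr_gt0.
case=> [|m] // m2.
have V := var_le Ha m.+1.
have T := Tsum R m.
set n := m.+1 in V T m2 *.
set s := Num.sqrt (n%:R : R) in V *.
set L := ln (n%:R : R) in T *.
set ST := \sum_(1 <= x < n.+1) Tw R x in V.
have s1 : 1 <= s.
  by rewrite /s -[X in X <= _]sqrtr1 ler_sqrt ?ler0n // ler1n.
have L2 : 1 / 2 <= L.
  apply: le_trans (ln2_ge R) _.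
  rewrite /L ler_ln ?posrE ?ltr0n //.
  by rewrite ler_nat.
have n0 : (0 : R) <= n%:R by exact: ler0n.
have ST' : ST <= n%:R * (2 + L) by exact: T.
have s0 : 0 <= s by exact: le_trans ler01 s1.
have c0 : 0 <= 8 * K0 alpha * s by rewrite !mulr_ge0 // ltW.
have V2 : variance alpha (@Ssum R n) <= n%:R + 8 * K0 alpha * s * (n%:R * (2 + L)).
  apply: le_trans V _; apply: lerD => //; exact: ler_wpM2l.
apply: le_trans V2 _.
set X := n%:R * s.
have X0 : 0 <= X by rewrite mulr_ge0.
have h1 : n%:R <= 2 * X * L.
  have : n%:R * 1 <= n%:R * s by apply: ler_wpM2l.
  rewrite mulr1 -/X => h.
  nra.
have h2 : 0 <= K0 alpha * X by rewrite mulr_ge0 // ltW.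
have -> : 8 * K0 alpha * s * (n%:R * (2 + L)) = 8 * (K0 alpha * X) * (2 + L) by rewrite /X; ring.
have -> : (2 + 40 * K0 alpha) * X * L = 2 * X * L + 40 * (K0 alpha * X) * L by ring.
nra.
Qed.
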